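(* Consider a planner with budget $A>0$ who chooses an inspection rate $\alpha\in(0,1)$ with $\alpha\le A$ (unit cost) to maximise the steady-state truth prevalence $\theta_0(\alpha)$; let $\alpha^\ast$ denote an optimal choice. Then there exists a value $\bar\lambda$ such that: (i) for all values of $\lambda>0$ and $x\in[0,1)$ there exists $\underline{A}$ such that for all $A<\underline{A}$ it is optimal to set $\alpha^\ast=A$; (ii) for all values of $\lambda$ and $x$ there exists $\bar A$ such that for all $A>\bar A$ it is optimal to set $\alpha^\ast=A$; (iii) for $\lambda<\bar\lambda$ there exists a range of budgets with $\underline{A}\le A\le\bar A$ for which it is optimal to set $\alpha^\ast<A$; in particular, when $A$ is just sufficient to fully eradicate the rumor (i.e. $A=1-\frac{1}{\lambda(1-x)}$), it may instead be optimal to choose $\alpha^\ast<A$ and let the rumor survive.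
   Context: Model: a population of mass $1$; mass $x$ of type-$0$ agents (biased towards the truth) and $1-x$ of type-$1$ agents (biased towards the rumor). A fraction $\alpha$ of agents of each type inspect messages; non-inspecting agents believe only the message matching their type, inspecting agents believe and transmit the truth upon receiving either message. $\lambda=k\nu/\delta>0$ is the diffusion rate ($k$ meetings per period, transmission rate $\nu$, death rate $\delta$). The steady-state rumor prevalence is $\theta_1(\alpha)=\max\{(1-\alpha)(1-x)-1/\lambda,0\}$; the rumor is eradicated when $\theta_1=0$. The steady-state truth prevalence $\theta_0(\alpha)$ is the unique positive fixed point (when it exists, and $0$ otherwise) of $H(\theta_0)=\alpha\frac{\lambda(\theta_0+\theta_1)}{1+\lambda(\theta_0+\theta_1)}+x(1-\alpha)\frac{\lambda\theta_0}{1+\lambda\theta_0}$; when $\theta_1=0$ it equals $\max\{\alpha(1-x)+x-1/\lambda,0\}$. *)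

(* Defs.v *)
From Stdlib Require Import Reals ClassicalEpsilon.
Open Scope R_scope.

(* Steady-state rumor prevalence theta_1(alpha). *)
Definition theta1 (lam x a : R) : R :=
  Rmax ((1 - a) * (1 - x) - 1 / lam) 0.

Definition H (lam x a t : R) : R :=
  a * (lam * (t + theta1 lam x a) / (1 + lam * (t + theta1 lam x a)))
  + x * (1 - a) * (lam * t / (1 + lam * t)).

Definition theta0 (lam x a : R) : R :=
  match excluded_middle_informative (exists t, 0 < t /\ H lam x a t = t) with
  | left h => proj1_sig (constructive_indefinite_description _ h)
  | right _ => 0
  end.

Definition optimal (lam x A a : R) : Prop :=
  0 < a < 1 /\ a <= A /\
  forall b, 0 < b < 1 -> b <= A -> theta0 lam x b <= theta0 lam x a.

(* Main.v *)
Require Import Defs.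
From Stdlib Require Import Reals.
From Stdlib Require Import Ranalysis5 Lra Psatz ClassicalEpsilon.
Open Scope R_scope.

Ltac nz := repeat split; try (intro; nra).

Lemma Rdiv_le_0_compat a b : 0 <= a -> 0 < b -> 0 <= a / b.
Proof. intros; unfold Rdiv; apply Rmult_le_pos; [lra|left; apply Rinv_0_lt_compat; lra]. Qed.

Lemma fr_bounds lam w : 0 <= lam -> 0 <= w -> 0 <= lam * w / (1 + lam * w) < 1.
Proof.
  intros Hl Hw. split.
  - apply Rdiv_le_0_compat; nra.
  - apply (Rmult_lt_reg_r (1 + lam * w)); [nra|].
    unfold Rdiv; rewrite Rmult_assoc, Rinv_l; nra.
Qed.

Lemma fr_pos lam w : 0 < lam -> 0 < w -> 0 < lam * w / (1 + lam * w).
Proof. intros; apply Rdiv_lt_0_compat; nra. Qed.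

Lemma fr_mono lam w1 w2 : 0 <= lam -> 0 <= w1 <= w2 ->
  lam * w1 / (1 + lam * w1) <= lam * w2 / (1 + lam * w2).
Proof.
  intros Hl Hw.
  assert (E : lam * w2 / (1 + lam * w2) - lam * w1 / (1 + lam * w1)
     = lam * (w2 - w1) / ((1 + lam * w1) * (1 + lam * w2))) by (field; nz).
  assert (0 <= lam * (w2 - w1) / ((1 + lam * w1) * (1 + lam * w2))).
  { apply Rdiv_le_0_compat; [nra|apply Rmult_lt_0_compat; nra]. }
  lra.
Qed.

Lemma gcross lam s t1 t2 : 0 < lam -> 0 <= s -> 0 < t1 < t2 ->
  lam * (t2 + s) / (1 + lam * (t2 + s)) * t1 <
  lam * (t1 + s) / (1 + lam * (t1 + s)) * t2.
Proof.
  intros Hl Hs Ht.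
  assert (E : lam * (t1 + s) / (1 + lam * (t1 + s)) * t2 -
              lam * (t2 + s) / (1 + lam * (t2 + s)) * t1
     = lam * (t2 - t1) * (s + lam * (t1 + s) * (t2 + s)) /
       ((1 + lam * (t1 + s)) * (1 + lam * (t2 + s)))) by (field; nz).
  assert (0 < lam * (t2 - t1) * (s + lam * (t1 + s) * (t2 + s)) /
       ((1 + lam * (t1 + s)) * (1 + lam * (t2 + s)))).
  { apply Rdiv_lt_0_compat; [|apply Rmult_lt_0_compat; nra].
    apply Rmult_lt_0_compat; [nra|].
    assert (0 < lam*(t1+s)*(t2+s)) by (apply Rmult_lt_0_compat; [apply Rmult_lt_0_compat|]; lra).
    lra. }
  lra.
Qed.

Lemma fcross lam t1 t2 : 0 < lam -> 0 < t1 < t2 ->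
  lam * t2 / (1 + lam * t2) * t1 < lam * t1 / (1 + lam * t1) * t2.
Proof.
  intros Hl Ht. pose proof (gcross lam 0 t1 t2 Hl (Rle_refl 0) Ht) as G.
  rewrite !Rplus_0_r in G. exact G.
Qed.

Lemma theta1_ge0 lam x a : 0 <= theta1 lam x a.
Proof. unfold theta1. apply Rmax_r. Qed.

Lemma theta1_0 lam x a : (1 - a) * (1 - x) - 1 / lam <= 0 -> theta1 lam x a = 0.
Proof. intros; unfold theta1; apply Rmax_right; lra. Qed.

Lemma theta1_s lam x a : 0 <= (1 - a) * (1 - x) - 1 / lam ->
  theta1 lam x a = (1 - a) * (1 - x) - 1 / lam.
Proof. intros; unfold theta1; apply Rmax_left; lra. Qed.

Lemma H_lt1 lam x a t : 0 < lam -> 0 <= x < 1 -> 0 <= a <= 1 -> 0 < t ->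
  H lam x a t < 1.
Proof.
  intros Hl Hx Ha Ht. unfold H.
  pose proof (theta1_ge0 lam x a).
  destruct (fr_bounds lam (t + theta1 lam x a)) as [g0 g1]; try lra.
  destruct (fr_bounds lam t) as [f0 f1]; try lra.
  set (g := lam * (t + theta1 lam x a) / (1 + lam * (t + theta1 lam x a))) in *.
  set (f := lam * t / (1 + lam * t)) in *.
  destruct (Req_dec a 0) as [->|Ha0].
  - nra.
  - assert (a * g < a) by nra.
    assert (x * f <= 1) by nra.
    assert ((1-a)*(x*f) <= (1-a)*1) by (apply Rmult_le_compat_l; lra). lra.
Qed.

Lemma nondeg lam x a t : 0 < t -> H lam x a t = t -> 0 <= a -> 0 <= x -> 0 < a \/ 0 < x.
Proof.
  intros Ht E Ha Hx.
  destruct (Rle_lt_or_eq_dec 0 a Ha) as [|<-]; [now left|].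
  destruct (Rle_lt_or_eq_dec 0 x Hx) as [|<-]; [now right|].
  exfalso. unfold H in E. rewrite !Rmult_0_l, Rplus_0_l in E. lra.
Qed.

Lemma Hcross lam x a t1 t2 : 0 < lam -> 0 <= x < 1 -> 0 <= a <= 1 ->
  (0 < a \/ 0 < x) -> 0 < t1 < t2 ->
  H lam x a t2 * t1 < H lam x a t1 * t2.
Proof.
  intros Hl Hx Ha Hnd Ht. unfold H.
  pose proof (theta1_ge0 lam x a) as T0.
  pose proof (gcross lam (theta1 lam x a) t1 t2 Hl T0 Ht) as G.
  pose proof (fcross lam t1 t2 Hl Ht) as F.
  set (g1 := lam * (t1 + theta1 lam x a) / (1 + lam * (t1 + theta1 lam x a))) in *.
  set (g2 := lam * (t2 + theta1 lam x a) / (1 + lam * (t2 + theta1 lam x a))) in *.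
  set (f1 := lam * t1 / (1 + lam * t1)) in *.
  set (f2 := lam * t2 / (1 + lam * t2)) in *.
  destruct Hnd as [Ha0|Hx0].
  - assert (a * (g2 * t1) < a * (g1 * t2)) by (apply Rmult_lt_compat_l; lra).
    assert (x * (1 - a) * (f2 * t1) <= x * (1 - a) * (f1 * t2)).
    { apply Rmult_le_compat_l; [nra|lra]. }
    nra.
  - destruct (Rle_lt_or_eq_dec a 1 (proj2 Ha)) as [Ha1|Ha1].
    + assert (x * (1 - a) * (f2 * t1) < x * (1 - a) * (f1 * t2)).
      { apply Rmult_lt_compat_l; [nra|lra]. }
      assert (a * (g2 * t1) <= a * (g1 * t2)) by (apply Rmult_le_compat_l; lra).
      nra.
    + subst a. assert (1 * (g2 * t1) < 1 * (g1 * t2)) by lra. nra.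
Qed.

Lemma fix_unique lam x a t1 t2 : 0 < lam -> 0 <= x < 1 -> 0 <= a <= 1 ->
  0 < t1 -> 0 < t2 -> H lam x a t1 = t1 -> H lam x a t2 = t2 -> t1 = t2.
Proof.
  intros Hl Hx Ha H1 H2 E1 E2.
  pose proof (nondeg lam x a t1 H1 E1 ltac:(lra) ltac:(lra)) as Hnd.
  destruct (Rtotal_order t1 t2) as [Hlt|[Heq|Hgt]]; auto; exfalso.
  - pose proof (Hcross lam x a t1 t2 Hl Hx Ha Hnd (conj H1 Hlt)). nra.
  - pose proof (Hcross lam x a t2 t1 Hl Hx Ha Hnd (conj H2 Hgt)). nra.
Qed.

Lemma theta0_fix lam x a t : 0 < lam -> 0 <= x < 1 -> 0 <= a <= 1 ->
  0 < t -> H lam x a t = t -> theta0 lam x a = t.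
Proof.
  intros Hl Hx Ha Ht E. unfold theta0.
  destruct excluded_middle_informative as [h|n].
  - destruct constructive_indefinite_description as [t' [Ht' E']]; simpl.
    apply (fix_unique lam x a t' t); auto.
  - exfalso; apply n; eauto.
Qed.

Lemma theta0_nofix lam x a : (forall t, 0 < t -> H lam x a t <> t) -> theta0 lam x a = 0.
Proof.
  intros N. unfold theta0.
  destruct excluded_middle_informative as [h|n]; auto.
  exfalso. destruct h as [t [Ht E]]. exact (N t Ht E).
Qed.

Lemma theta0_cases lam x a :
  (theta0 lam x a = 0 /\ forall t, 0 < t -> H lam x a t <> t) \/
  (0 < theta0 lam x a /\ H lam x a (theta0 lam x a) = theta0 lam x a).
Proof.
  unfold theta0.
  destruct excluded_middle_informative as [h|n].
  - right. destruct constructive_indefinite_description as [t' [Ht' E']]; simpl. auto.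
  - left. split; auto. intros t Ht E. apply n; eauto.
Qed.

Lemma theta0_ge0 lam x a : 0 <= theta0 lam x a.
Proof. destruct (theta0_cases lam x a) as [[-> _]|[? _]]; lra. Qed.

Lemma H_cont_t lam x a t0 : 0 < lam -> 0 < t0 -> continuity_pt (fun t => H lam x a t) t0.
Proof.
  intros Hl Ht. unfold H.
  pose proof (theta1_ge0 lam x a) as T0.
  generalize dependent (theta1 lam x a). intros s Hs.
  reg; nra.
Qed.

Lemma theta0_ge lam x a t : 0 < lam -> 0 <= x < 1 -> 0 <= a <= 1 ->
  0 < t -> t <= H lam x a t -> t <= theta0 lam x a.
Proof.
  intros Hl Hx Ha Ht E.
  destruct (Req_dec (H lam x a t) t) as [Eq|Ne].
  - rewrite (theta0_fix lam x a t); auto; lra.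
  - pose proof (H_lt1 lam x a t Hl Hx Ha Ht) as Hlt0.
    assert (Hlt1 : t < 1) by lra.
    destruct (IVT_interv (fun z => z - H lam x a z) t 1) as [z [Hz Ez]].
    + intros c Hc. apply continuity_pt_minus.
      * apply derivable_continuous_pt, derivable_pt_id.
      * apply H_cont_t; lra.
    + exact Hlt1.
    + lra.
    + pose proof (H_lt1 lam x a 1 Hl Hx Ha ltac:(lra)) as Hlt2. lra.
    + rewrite (theta0_fix lam x a z); auto; lra.
Qed.

Lemma theta0_lt lam x a t : 0 < lam -> 0 <= x < 1 -> 0 <= a <= 1 ->
  0 < t -> H lam x a t < t -> theta0 lam x a < t.
Proof.
  intros Hl Hx Ha Ht E.
  destruct (theta0_cases lam x a) as [[-> _]|[Hp Ef]]; [lra|].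
  set (th := theta0 lam x a) in *.
  destruct (Rlt_le_dec th t) as [|Hge]; auto. exfalso.
  destruct (Rle_lt_or_eq_dec t th Hge) as [Hlt|Heq].
  - pose proof (nondeg lam x a th Hp Ef ltac:(lra) ltac:(lra)) as Hnd.
    pose proof (Hcross lam x a t th Hl Hx Ha Hnd (conj Ht Hlt)) as Hc. rewrite Ef in Hc. nra.
  - rewrite <- Heq in Ef. lra.
Qed.

Lemma theta0_le lam x a t : 0 < lam -> 0 <= x < 1 -> 0 <= a <= 1 ->
  0 < t -> H lam x a t <= t -> theta0 lam x a <= t.
Proof.
  intros Hl Hx Ha Ht E.
  destruct (Req_dec (H lam x a t) t) as [Eq|Ne].
  - rewrite (theta0_fix lam x a t); auto; lra.
  - left; apply theta0_lt; auto; lra.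
Qed.

Lemma theta0_mono lam x a b : 0 < lam -> 0 <= x < 1 -> 0 <= a <= 1 -> 0 <= b <= 1 ->
  (forall t, 0 < t -> H lam x b t <= H lam x a t) -> theta0 lam x b <= theta0 lam x a.
Proof.
  intros Hl Hx Ha Hb M.
  destruct (theta0_cases lam x b) as [[-> _]|[Hp Ef]]; [apply theta0_ge0|].
  apply theta0_ge; auto. rewrite <- Ef at 1. apply M; auto.
Qed.

Lemma fixc lam c t : 0 < lam -> 0 < t -> c * (lam * t / (1 + lam * t)) = t -> c * lam = 1 + lam * t.
Proof.
  intros Hl Ht E.
  assert (E2 : c * (lam * t / (1 + lam * t)) * (1 + lam * t) = c * lam * t) by (field; nz).
  rewrite E in E2.
  apply (Rmult_eq_reg_r t); [|lra]. nra.
Qed.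

Lemma theta0_norumor lam x a : 0 < lam -> 0 <= x < 1 -> 0 <= a <= 1 ->
  (1 - a) * (1 - x) - 1 / lam <= 0 ->
  theta0 lam x a = Rmax (a * (1 - x) + x - 1 / lam) 0.
Proof.
  intros Hl Hx Ha Hs.
  assert (EH : forall t, H lam x a t = (a * (1 - x) + x) * (lam * t / (1 + lam * t))).
  { intros t. unfold H. rewrite theta1_0 by lra. rewrite Rplus_0_r. ring. }
  set (c := a * (1 - x) + x) in *.
  unfold Rmax. destruct Rle_dec as [Hle|Hgt].
  - apply theta0_nofix. intros t Ht E. rewrite EH in E.
    apply fixc in E; auto.
    assert (c * lam <= 1).
    { assert (Hc : c * lam <= (1/lam) * lam) by (apply Rmult_le_compat_r; lra).
      replace (1/lam*lam) with 1 in Hc by (field; lra). lra. }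
    nra.
  - apply theta0_fix; auto.
    + lra.
    + rewrite EH.
      assert (E1 : 1 + lam * (c - 1/lam) = c * lam) by (field; lra).
      rewrite E1. field. split; [lra|].
      intro Hc. subst c. 
      assert (0 < 1/lam) by (apply Rdiv_lt_0_compat; lra). nra.
Qed.

Lemma Ha_cont lam x t a0 : 0 < lam -> 0 < t -> continuity_pt (fun a => H lam x a t) a0.
Proof.
  intros Hl Ht.
  apply continuity_pt_locally_ext with
    (f := fun a => a * (lam * (t + (((1-a)*(1-x) - 1/lam) + Rabs ((1-a)*(1-x) - 1/lam))/2)
              / (1 + lam * (t + (((1-a)*(1-x) - 1/lam) + Rabs ((1-a)*(1-x) - 1/lam))/2)))
              + x * (1 - a) * (lam * t / (1 + lam * t))) (a := 1).
  - lra.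
  - intros y _. unfold H, theta1.
    replace (((1-y)*(1-x) - 1/lam + Rabs ((1-y)*(1-x) - 1/lam))/2)
      with (Rmax ((1 - y) * (1 - x) - 1 / lam) 0); [reflexivity|].
    unfold Rmax, Rabs; destruct Rle_dec; destruct Rcase_abs; lra.
  - reg.
    set (u := (1-a0)*(1-x) - 1/lam).
    assert (0 <= (u + Rabs u) * / 2) by (unfold Rabs; destruct Rcase_abs; lra).
    nra.
Qed.

Lemma cont_lt g a0 c : continuity_pt g a0 -> g a0 < c ->
  exists d, 0 < d /\ forall a, Rabs (a - a0) < d -> g a < c.
Proof.
  intros Hc Hlt.
  destruct (Hc (c - g a0)) as [d [Hd Hd']]; [lra|].
  exists d; split; auto. intros a Ha.
  destruct (Req_dec a a0) as [->|Hne]; auto.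
  assert (D : R_dist (g a) (g a0) < c - g a0).
  { apply Hd'. split; [split; [exact I| auto]| exact Ha]. }
  unfold R_dist in D. apply Rabs_def2 in D. lra.
Qed.

Lemma cont_gt g a0 c : continuity_pt g a0 -> c < g a0 ->
  exists d, 0 < d /\ forall a, Rabs (a - a0) < d -> c < g a.
Proof.
  intros Hc Hlt.
  destruct (Hc (g a0 - c)) as [d [Hd Hd']]; [lra|].
  exists d; split; auto. intros a Ha.
  destruct (Req_dec a a0) as [->|Hne]; auto.
  assert (D : R_dist (g a) (g a0) < g a0 - c).
  { apply Hd'. split; [split; [exact I| auto]| exact Ha]. }
  unfold R_dist in D. apply Rabs_def2 in D. lra.
Qed.

Lemma F_cont lam x a0 eps : 0 < lam -> 0 <= x < 1 -> 0 <= a0 <= 1 -> 0 < eps ->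
  exists d, 0 < d /\ forall a, 0 <= a <= 1 -> Rabs (a - a0) < d ->
    Rabs (theta0 lam x a - theta0 lam x a0) < eps.
Proof.
  intros Hl Hx Ha0 He.
  set (F := theta0 lam x a0).
  pose proof (theta0_ge0 lam x a0) as F0. fold F in F0.
  set (t1 := F + eps/2).
  assert (Ht1 : H lam x a0 t1 < t1).
  { destruct (Rlt_le_dec (H lam x a0 t1) t1) as [|Hge]; auto.
    pose proof (theta0_ge lam x a0 t1 Hl Hx Ha0 ltac:(unfold t1; lra) Hge) as Q. fold F in Q. unfold t1 in Q. lra. }
  destruct (cont_lt _ a0 t1 (Ha_cont lam x t1 a0 Hl ltac:(unfold t1; lra)) Ht1) as [d1 [Hd1 D1]].
  destruct (Rle_lt_dec (F - eps/2) 0) as [Hsm|Hbig].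
  - exists d1; split; auto. intros a Ha Hd.
    pose proof (theta0_lt lam x a t1 Hl Hx Ha ltac:(unfold t1; lra) (D1 a Hd)) as Q1.
    pose proof (theta0_ge0 lam x a) as Q2.
    unfold t1 in Q1. apply Rabs_def1; fold F; lra.
  - set (t2 := F - eps/2).
    assert (Ht2 : t2 < H lam x a0 t2).
    { destruct (Rlt_le_dec t2 (H lam x a0 t2)) as [|Hge]; auto.
      pose proof (theta0_le lam x a0 t2 Hl Hx Ha0 Hbig Hge) as Q. fold F in Q. unfold t2 in Q. lra. }
    destruct (cont_gt _ a0 t2 (Ha_cont lam x t2 a0 Hl Hbig) Ht2) as [d2 [Hd2 D2]].
    exists (Rmin d1 d2); split; [apply Rmin_pos; auto|]. intros a Ha Hd.
    assert (Hd1' : Rabs (a - a0) < d1) by (eapply Rlt_le_trans; [exact Hd| apply Rmin_l]).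
    assert (Hd2' : Rabs (a - a0) < d2) by (eapply Rlt_le_trans; [exact Hd| apply Rmin_r]).
    pose proof (theta0_lt lam x a t1 Hl Hx Ha ltac:(unfold t1; lra) (D1 a Hd1')) as Q1.
    pose proof (theta0_ge lam x a t2 Hl Hx Ha Hbig (Rlt_le _ _ (D2 a Hd2'))) as Q2.
    unfold t1 in Q1; unfold t2 in Q2. apply Rabs_def1; fold F; lra.
Qed.

Definition clamp (a : R) := Rmax 0 (Rmin a 1).

Lemma clamp_in a : 0 <= clamp a <= 1.
Proof. unfold clamp, Rmax, Rmin; repeat destruct Rle_dec; lra. Qed.

Lemma clamp_id a : 0 <= a <= 1 -> clamp a = a.
Proof. intros; unfold clamp, Rmax, Rmin; repeat destruct Rle_dec; lra. Qed.

Lemma clamp_lip a b : Rabs (clamp a - clamp b) <= Rabs (a - b).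
Proof.
  unfold clamp, Rmax, Rmin; repeat destruct Rle_dec; unfold Rabs; repeat destruct Rcase_abs; lra.
Qed.

Lemma G_cont lam x a0 : 0 < lam -> 0 <= x < 1 ->
  continuity_pt (fun a => theta0 lam x (clamp a)) a0.
Proof.
  intros Hl Hx eps He.
  destruct (F_cont lam x (clamp a0) eps Hl Hx (clamp_in a0) He) as [d [Hd D]].
  exists d; split; [lra|]. intros a [_ Ha]. simpl in *. unfold R_dist in *.
  apply D; [apply clamp_in|].
  eapply Rle_lt_trans; [apply clamp_lip| exact Ha].
Qed.

Lemma Hmono_small lam x a b : 0 < lam -> 0 <= x < 1 -> 0 < b < a -> a <= 1 ->
  b < (1 - a) * (1 - x) - 1 / lam ->
  forall t, 0 < t -> H lam x b t <= H lam x a t.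
Proof.
  intros Hl Hx Hb Ha Hs t Ht.
  set (sa := (1 - a) * (1 - x) - 1 / lam) in *.
  assert (Hsb : sa <= (1 - b) * (1 - x) - 1 / lam) by (unfold sa; nra).
  unfold H. rewrite (theta1_s lam x a) by (fold sa; lra).
  rewrite (theta1_s lam x b) by lra. fold sa.
  set (sb := (1 - b) * (1 - x) - 1 / lam) in *.
  assert (Esb : sb = sa + (a - b) * (1 - x)) by (unfold sa, sb; ring).
  set (P := 1 / (1 + lam * (t + sa))).
  set (Q := 1 / (1 + lam * (t + sb))).
  set (R0 := 1 / (1 + lam * t)).
  assert (E : a * (lam * (t + sa) / (1 + lam * (t + sa))) + x * (1 - a) * (lam * t / (1 + lam * t))
    - (b * (lam * (t + sb) / (1 + lam * (t + sb))) + x * (1 - b) * (lam * t / (1 + lam * t)))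
    = (a - b) * ((1 - x) * lam * P * (t + sa - b * Q) + x * (R0 - P))).
  { unfold P, Q, R0. rewrite Esb. field. nz. }
  assert (HP : 0 < P) by (unfold P; apply Rdiv_lt_0_compat; nra).
  assert (HQ1 : Q <= 1).
  { unfold Q. apply (Rmult_le_reg_r (1 + lam * (t + sb))); [nra|].
    unfold Rdiv; rewrite Rmult_assoc, Rinv_l by nra. nra. }
  assert (HQ0 : 0 < Q) by (unfold Q; apply Rdiv_lt_0_compat; nra).
  assert (HR : P <= R0).
  { assert (ER : R0 - P = lam * sa / ((1 + lam * t) * (1 + lam * (t + sa))))
      by (unfold R0, P; field; nz).
    assert (0 <= lam * sa / ((1 + lam * t) * (1 + lam * (t + sa)))).
    { apply Rdiv_le_0_compat; [nra| apply Rmult_lt_0_compat; nra]. }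
    lra. }
  assert (B1 : 0 <= t + sa - b * Q) by nra.
  assert (B2 : 0 <= (1 - x) * lam * P * (t + sa - b * Q)).
  { apply Rmult_le_pos; [|lra]. apply Rmult_le_pos; [|lra]. apply Rmult_le_pos; lra. }
  assert (B3 : 0 <= x * (R0 - P)) by (apply Rmult_le_pos; lra).
  assert (0 <= (a - b) * ((1 - x) * lam * P * (t + sa - b * Q) + x * (R0 - P)))
    by (apply Rmult_le_pos; lra).
  lra.
Qed.

Lemma Rmax_mono u v : u <= v -> Rmax u 0 <= Rmax v 0.
Proof. intros; unfold Rmax; repeat destruct Rle_dec; lra. Qed.

Lemma part1 lam x : 0 < lam -> 0 <= x < 1 ->
  exists Alow, 0 < Alow /\ forall A, 0 < A < Alow -> optimal lam x A A.
Proof.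
  intros Hl Hx.
  set (k := (1 - x) - 1 / lam).
  destruct (Rle_lt_dec k 0) as [Hk|Hk].
  - exists (1/2). split; [lra|]. intros A HA.
    unfold optimal. split; [lra|]. split; [lra|]. intros b Hb HbA.
    rewrite !theta0_norumor; try lra; unfold k in Hk; try nra.
    apply Rmax_mono. nra.
  - exists (k / 2). split; [lra|]. intros A HA.
    assert (k <= 1 - x).
    { unfold k. assert (0 < 1 / lam) by (apply Rdiv_lt_0_compat; lra). lra. }
    unfold optimal. split; [lra|]. split; [lra|]. intros b Hb HbA.
    destruct (Req_dec b A) as [->|Hne]; [lra|].
    apply theta0_mono; try lra.
    apply Hmono_small; try lra.
    unfold k in *. nra.
Qed.

Lemma bound2 lam x b : 1 < lam -> 0 <= x < 1 -> 0 < b < 1 ->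
  0 < (1 - b) * (1 - x) - 1 / lam ->
  theta0 lam x b <= (1 - 1 / lam) * (lam * 2 / (1 + lam * 2)).
Proof.
  intros Hl Hx Hb Hs.
  assert (Hil : 0 < 1 / lam < 1).
  { split; [apply Rdiv_lt_0_compat; lra|].
    apply (Rmult_lt_reg_r lam); [lra|]. unfold Rdiv. rewrite Rmult_assoc, Rinv_l; lra. }
  destruct (fr_bounds lam 2) as [G0 G1]; try lra.
  destruct (theta0_cases lam x b) as [[-> _]|[Hp Ef]].
  - apply Rmult_le_pos; lra.
  - set (t := theta0 lam x b) in *.
    pose proof (H_lt1 lam x b t ltac:(lra) Hx ltac:(lra) Hp) as Ht1.
    rewrite Ef in Ht1.
    unfold H in Ef. rewrite theta1_s in Ef by lra.
    set (s := (1 - b) * (1 - x) - 1 / lam) in *.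
    assert (Hs1 : s < 1) by (unfold s; nra).
    assert (Hfg : lam * t / (1 + lam * t) <= lam * (t + s) / (1 + lam * (t + s)))
      by (apply fr_mono; lra).
    assert (Hg2 : lam * (t + s) / (1 + lam * (t + s)) <= lam * 2 / (1 + lam * 2))
      by (apply fr_mono; lra).
    set (g := lam * (t + s) / (1 + lam * (t + s))) in *.
    set (f := lam * t / (1 + lam * t)) in *.
    set (G2 := lam * 2 / (1 + lam * 2)) in *.
    assert (x * (1 - b) * f <= x * (1 - b) * g) by (apply Rmult_le_compat_l; nra).
    set (c := b + x * (1 - b)).
    assert (Hc : c = 1 - 1 / lam - s) by (unfold c, s; ring).
    assert (Hc0 : 0 <= c) by (unfold c; nra).
    assert (c * g <= c * G2) by (apply Rmult_le_compat_l; lra).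
    assert (c * G2 <= (1 - 1/lam) * G2) by (apply Rmult_le_compat_r; lra).
    assert (t <= c * g) by (unfold c; nra).
    lra.
Qed.

Lemma part2 lam x : 0 < lam -> 0 <= x < 1 ->
  exists Ahigh, Ahigh < 1 /\ forall A, Ahigh < A < 1 -> optimal lam x A A.
Proof.
  intros Hl Hx.
  destruct (Rle_lt_dec lam 1) as [Hl1|Hl1].
  - exists 0. split; [lra|]. intros A HA.
    assert (Hil : 1 <= 1 / lam).
    { apply (Rmult_le_reg_r lam); [lra|]. unfold Rdiv. rewrite Rmult_assoc, Rinv_l; lra. }
    unfold optimal. split; [lra|]. split; [lra|]. intros b Hb HbA.
    rewrite !theta0_norumor; try lra; try nra.
    apply Rmax_mono. nra.
  - set (B := (1 - 1 / lam) * (lam * 2 / (1 + lam * 2))).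
    assert (Hil : 0 < 1 / lam < 1).
    { split; [apply Rdiv_lt_0_compat; lra|].
      apply (Rmult_lt_reg_r lam); [lra|]. unfold Rdiv. rewrite Rmult_assoc, Rinv_l; lra. }
    destruct (fr_bounds lam 2) as [G0 G1]; try lra.
    set (d := (1 - 1 / lam) - B).
    assert (Hd : 0 < d).
    { unfold d, B. assert (0 < (1 - 1/lam) * (1 - lam * 2 / (1 + lam * 2)))
        by (apply Rmult_lt_0_compat; lra). nra. }
    set (m := Rmin d (1 / lam)).
    assert (Hm : 0 < m) by (unfold m; apply Rmin_pos; lra).
    assert (Hmd : m <= d) by apply Rmin_l.
    assert (Hml : m <= 1/lam) by apply Rmin_r.
    assert (Hmx : 0 < m / (1 - x)) by (apply Rdiv_lt_0_compat; lra).
    exists (Rmax 0 (1 - m / (1 - x))). split.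
    { unfold Rmax; destruct Rle_dec; lra. }
    intros A [HA1 HA2].
    assert (HA0 : 0 < A) by (eapply Rle_lt_trans; [apply Rmax_l| exact HA1]).
    assert (HA3 : 1 - m / (1 - x) < A) by (eapply Rle_lt_trans; [apply Rmax_r| exact HA1]).
    assert (HAm : (1 - A) * (1 - x) < m).
    { assert (Hq : 1 - A < m / (1 - x)) by lra.
      apply (Rmult_lt_compat_r (1 - x)) in Hq; [|lra].
      unfold Rdiv in Hq. rewrite Rmult_assoc, Rinv_l in Hq; lra. }
    assert (FA : B <= theta0 lam x A).
    { rewrite theta0_norumor; try lra.
      eapply Rle_trans; [|apply Rmax_l]. unfold d in Hmd. lra. }
    unfold optimal. split; [lra|]. split; [lra|]. intros b Hb HbA.
    destruct (Rle_lt_dec ((1 - b) * (1 - x) - 1 / lam) 0) as [Hs|Hs].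
    + rewrite !theta0_norumor; try lra.
      apply Rmax_mono. nra.
    + pose proof (bound2 lam x b Hl1 Hx Hb Hs) as Hbd. fold B in Hbd. lra.
Qed.

Lemma part3 lam x : 0 < lam < 2 -> 0 <= x < 1 -> 1 < lam * (1 - x) ->
       exists A1 A2, A1 < A2 /\
         A1 <= 1 - 1 / (lam * (1 - x)) <= A2 /\
         forall A, A1 <= A <= A2 ->
           exists a, optimal lam x A a /\ a < A.
Proof.
  intros Hl Hx Hly.
  set (y := 1 - x) in *.
  assert (Hy : 0 < y <= 1) by (unfold y; lra).
  assert (Hl1 : 1 < lam) by nra.
  set (Ae := 1 - 1 / (lam * y)).
  set (A2 := 1 - (1 - 1 / lam) / y).
  assert (E1 : (1 - Ae) * y = 1 / lam) by (unfold Ae; field; lra).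
  assert (E2 : (1 - A2) * y = 1 - 1 / lam) by (unfold A2; field; lra).
  assert (Hil : 1/2 < 1 / lam < 1).
  { assert (El : 1/lam * lam = 1) by (field; lra). split; nra. }
  assert (HAe0 : 0 < Ae).
  { unfold Ae. assert (1 / (lam * y) < 1); [|lra].
    apply (Rmult_lt_reg_r (lam * y)); [lra|]. unfold Rdiv; rewrite Rmult_assoc, Rinv_l; lra. }
  assert (HAeA2 : Ae < A2) by nra.
  assert (HA21 : A2 < 1) by nra.
  assert (Fmid : forall b, Ae <= b <= A2 -> theta0 lam x b = 0).
  { intros b Hb. rewrite theta0_norumor; try lra; fold y.
    - unfold Rmax; destruct Rle_dec; [reflexivity|]. exfalso. unfold y in *. nra.
    - nra. }
  assert (F0 : theta0 lam x 0 = 0).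
  { apply theta0_nofix. intros t Ht E. unfold H in E.
    rewrite Rmult_0_l, Rplus_0_l, Rminus_0_r, Rmult_1_r in E.
    apply fixc in E; try lra. unfold y in Hly. nra. }
  set (a0 := Ae / 2).
  assert (Fa0 : 0 < theta0 lam x a0).
  { set (s := (1 - a0) * (1 - x) - 1 / lam).
    assert (Hs : 0 < s).
    { unfold s, a0; fold y. assert (0 < Ae*y) by (apply Rmult_lt_0_compat; lra). lra. }
    set (tau := a0 * (lam * s / (1 + lam * s))).
    assert (Htau : 0 < tau) by (unfold tau; apply Rmult_lt_0_compat; [unfold a0; lra| apply fr_pos; lra]).
    apply Rlt_le_trans with tau; auto.
    apply theta0_ge; try lra. unfold a0; lra.
    unfold H. rewrite theta1_s by (fold s; lra). fold s.
    assert (lam * s / (1 + lam * s) <= lam * (tau + s) / (1 + lam * (tau + s))) by (apply fr_mono; lra).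
    destruct (fr_bounds lam tau) as [f0 _]; try lra.
    assert (a0 * (lam * s / (1 + lam * s)) <= a0 * (lam * (tau + s) / (1 + lam * (tau + s))))
      by (apply Rmult_le_compat_l; unfold a0; lra).
    assert (0 <= x * (1 - a0) * (lam * tau / (1 + lam * tau))).
    { apply Rmult_le_pos; [|lra]. apply Rmult_le_pos; unfold a0; lra. }
    unfold tau at 1. lra. }
  destruct (continuity_ab_maj (fun a => theta0 lam x (clamp a)) 0 Ae ltac:(lra)
              (fun c _ => G_cont lam x c ltac:(lra) Hx)) as [Mx [HM HMx]].
  assert (Gid : forall c, 0 <= c <= Ae -> theta0 lam x (clamp c) = theta0 lam x c).
  { intros c Hc. rewrite clamp_id; auto; lra. }
  assert (HMa0 : theta0 lam x a0 <= theta0 lam x Mx).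
  { rewrite <- (Gid a0) by (unfold a0; lra). rewrite <- (Gid Mx) by lra. apply HM. unfold a0; lra. }
  assert (HMpos : 0 < Mx).
  { destruct (Rle_lt_or_eq_dec 0 Mx (proj1 HMx)) as [|E]; auto. rewrite <- E in HMa0. lra. }
  assert (HMlt : Mx < Ae).
  { destruct (Rle_lt_or_eq_dec Mx Ae (proj2 HMx)) as [|E]; auto. rewrite E, (Fmid Ae) in HMa0; [lra|split; lra]. }
  exists Ae, A2. split; [lra|]. split; [fold y; fold Ae; split; lra|].
  intros A HA. exists Mx. split; [|lra].
  unfold optimal. split; [lra|]. split; [lra|]. intros b Hb HbA.
  destruct (Rle_lt_dec b Ae) as [Hb1|Hb1].
  - rewrite <- (Gid b) by lra. rewrite <- (Gid Mx) by lra. apply HM. lra.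
  - rewrite Fmid by (split; lra). apply theta0_ge0.
Qed.

Theorem proposition2 :
  exists lambar : R, 1 < lambar /\
    (forall lam x, 0 < lam -> 0 <= x < 1 ->
       exists Alow, 0 < Alow /\
         forall A, 0 < A < Alow -> optimal lam x A A) /\
    (forall lam x, 0 < lam -> 0 <= x < 1 ->
       exists Ahigh, Ahigh < 1 /\
         forall A, Ahigh < A < 1 -> optimal lam x A A) /\
    (forall lam x, 0 < lam < lambar -> 0 <= x < 1 -> 1 < lam * (1 - x) ->
       exists A1 A2, A1 < A2 /\
         A1 <= 1 - 1 / (lam * (1 - x)) <= A2 /\
         forall A, A1 <= A <= A2 ->
           exists a, optimal lam x A a /\ a < A).
Proof.
  exists 2. split; [lra|]. split; [exact part1|]. split; [exact part2|]. exact part3.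
Qed.
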